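(* Fix $v\in(0,\tfrac12)$ and consider $\alpha\in[0,1]$. For $y\in[0,1]$ let $$x^A(y)=\begin{cases}-\alpha+\sqrt{\alpha^2+y^2-2v}, & y\ge\sqrt{2v},\\ 0,& y<\sqrt{2v},\end{cases}\qquad W(y)=\int_{x^A(y)}^{y}\Big(\alpha x+v-\int_x^y\tilde x\,d\tilde x\Big)\,dx .$$ Then there exists a threshold $\alpha^P$ such that the social planner's problem $\max_{y\in[0,1]}W(y)$ is solved by $y^{P*}=\tfrac12\big(\alpha+\sqrt{\alpha^2+4v}\big)$ when $\alpha<\alpha^P$ (content moderation) and by $y^{P*}=1$ (no content moderation) when $\alpha>\alpha^P$. Moreover, with $\alpha^A,\alpha^S,y^{A*},y^{S*}$ as defined in the context, $$\alpha^P<\alpha^S<\alpha^A,$$ and whenever $\alpha<\alpha^P$, $$y^{S*}<y^{P*}<y^{A*}.$$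
   Context: Model: users are indexed by an extremeness index $x$ uniformly distributed (density 1) on $[0,1]$. A platform chooses a moderation level $y\in[0,1]$ and (with perfect technology) removes all content of users with $x>y$. A participating user $x\le y$ has utility $U(x)=\alpha x+v-\int_{\tilde x\in\hat{\mathcal X},\,x<\tilde x\le y}\tilde x\,d\tilde x$, where $\hat{\mathcal X}$ is the set of participating users; $\alpha\ge 0$ is the posting-utility parameter and $v$ the reading utility. Under this model, for a given $y$ the participating users (with no fee) form the interval $[x^A(y),y]$ with $x^A$ as in the claim, and the social welfare is $W(y)$. Advertising platform: maximizes $\zeta\,(y-x^A(y))$ over $y$ (with $\zeta>0$); define $\alpha^A:=\sqrt{2v}$ and $y^{A*}:=\sqrt{2v}$ (its optimal moderation level when $\alpha<\alpha^A$; for $\alpha\ge\alpha^A$ it chooses $y=1$). Subscription platform: chooses $y\in[0,1]$ and fee $p\ge0$ to maximize $p\,(y-x^S(y,p))$ where $x^S(y,p)=-\alpha+\sqrt{\alpha^2+y^2-2(v-p)}$ if $y^2\ge 2(v-p)$ and $x^S(y,p)=0$ otherwise. Define $\Pi(\alpha)=\max_{p\ge 0}p\big(1+\alpha-\sqrt{\alpha^2+1-2(v-p)}\big)$ and $\alpha^S:=\inf\{\alpha\ge0:\Pi(\alpha)\ge (2v/3)^{3/2}\}$; this is the threshold below which the subscription platform moderates content, choosing $y^{S*}:=\sqrt{2v/3}$ (and above which it chooses $y=1$). *)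

(* Defs.v *)
From Stdlib Require Import Reals.
From Coquelicot Require Import Coquelicot.
Open Scope R_scope.

(* Lowest participating user with no fee: x^A(y). *)
Definition xA (alpha v y : R) : R :=
  if Rlt_dec y (sqrt (2 * v)) then 0
  else - alpha + sqrt (alpha ^ 2 + y ^ 2 - 2 * v).

Definition W (alpha v y : R) : R :=
  RInt (fun x => alpha * x + v - RInt (fun t => t) x y) (xA alpha v y) y.

Definition yP (alpha v : R) : R := (alpha + sqrt (alpha ^ 2 + 4 * v)) / 2.

Definition alphaA (v : R) : R := sqrt (2 * v).
Definition yA (v : R) : R := sqrt (2 * v).

(* Subscription platform: Pi(alpha) = max_{p>=0} p (1 + alpha - sqrt(alpha^2 + 1 - 2 (v - p))),
   taken as the supremum (the max is attained). *)
Definition PiS (v alpha : R) : R :=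
  real (Lub_Rbar (fun z => exists p, 0 <= p /\
          z = p * (1 + alpha - sqrt (alpha ^ 2 + 1 - 2 * (v - p))))).

Definition subs_moderated_profit (v : R) : R := (2 * v / 3) * sqrt (2 * v / 3).

Definition alphaS (v : R) : R :=
  real (Glb_Rbar (fun alpha => 0 <= alpha /\ subs_moderated_profit v <= PiS v alpha)).

Definition yS (v : R) : R := sqrt (2 * v / 3).

Definition planner_optimal (alpha v y : R) : Prop :=
  0 <= y <= 1 /\ forall y', 0 <= y' <= 1 -> W alpha v y' <= W alpha v y.

(* Main.v *)
Require Import Defs.
From Stdlib Require Import Reals Lra Psatz List.
From Coquelicot Require Import Coquelicot.
Import ListNotations.
Open Scope R_scope.

Definition Af (a v y : R) := a*y^2/2 + v*y - y^3/3.
Definition Hf (a v z y : R) := Af a v y - (a*z^2/2 + (v - y^2/2)*z + z^3/6).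

Lemma RInt_id_val : forall x y, RInt (fun t => t) x y = (y^2 - x^2)/2.
Proof.
  intros x y.
  apply is_RInt_unique.
  assert (H := is_RInt_derive (fun t => t^2/2) (fun t => t) x y).
  replace ((y^2 - x^2)/2) with (minus ((fun t => t^2/2) y) ((fun t => t^2/2) x)).
  2:{ unfold minus, plus, opp; simpl. field. }
  apply H.
  - intros z _. auto_derive; [auto | idtac]. field.
  - intros z _. apply continuous_id.
Qed.

Lemma W_eq : forall a v y, W a v y = Hf a v (xA a v y) y.
Proof.
  intros a v y. unfold W.
  rewrite (RInt_ext _ (fun x => a*x + v - (y^2-x^2)/2)).
  2:{ intros z _. rewrite RInt_id_val. reflexivity. }
  apply is_RInt_unique.
  set (F := fun x => a*x^2/2 + (v - y^2/2)*x + x^3/6).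
  assert (H := is_RInt_derive F (fun x => a*x + v - (y^2-x^2)/2) (xA a v y) y).
  replace (Hf a v (xA a v y) y) with (minus (F y) (F (xA a v y))).
  2:{ unfold minus, plus, opp, F, Hf, Af; simpl. field. }
  apply H.
  - intros z _. unfold F. auto_derive; [auto | field].
  - intros z _. apply (@ex_derive_continuous R_AbsRing R_NormedModule). auto_derive. auto.
Qed.

Lemma A_bound : forall a v y z, 0 <= y -> 0 <= z -> 0 < 2/3*z - a/2 ->
  Af a v y <= Af a v z + (a*z+v-z^2)^2/(4*(2/3*z-a/2)).
Proof.
  intros a v y z Hy Hz Hk.
  set (k := 2/3*z - a/2) in *.
  set (h := y - z).
  assert (E : Af a v y - Af a v z = (a*z+v-z^2)*h + (a-2*z)*h^2/2 - h^3/3).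
  { unfold Af, h. field. }
  assert (E2 : (a-2*z)*h^2/2 - h^3/3 = - k*h^2 - h^2*(z+h)/3) by (unfold k; field).
  assert (Hzh : z + h = y) by (unfold h; ring).
  assert (0 <= h^2*(z+h)) by (rewrite Hzh; apply Rmult_le_pos; nra).
  assert (4*k*(Af a v y - Af a v z) <= (a*z+v-z^2)^2).
  { rewrite E.
    assert (E3 : 4*k*((a*z+v-z^2)*h + (a-2*z)*h^2/2 - h^3/3) = (a*z+v-z^2)^2 - ((a*z+v-z^2) - 2*k*h)^2 - 4/3*k*(h^2*(z+h))) by (unfold k; field).
    rewrite E3. assert (0 <= k*(h^2*(z+h))) by (apply Rmult_le_pos; lra).
    pose proof (pow2_ge_0 ((a*z+v-z^2) - 2*k*h)). lra. }
  assert (Af a v y - Af a v z <= (a*z+v-z^2)^2/(4*k)).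
  { apply (Rmult_le_reg_l (4*k)); [lra|]. replace (4*k*((a*z+v-z^2)^2/(4*k))) with ((a*z+v-z^2)^2) by (field; lra). lra. }
  lra.
Qed.

Lemma f_bound : forall b K s s0, 0 <= s -> 0 < 2*s0-1-b ->
  (s^2-K)*(1+b-s) <= (s0^2-K)*(1+b-s0) + (-3*s0^2+2*(1+b)*s0+K)^2/(4*(2*s0-1-b)).
Proof.
  intros b K s s0 Hs Hk.
  set (k := 2*s0-1-b) in *. set (h := s - s0).
  set (fp := -3*s0^2+2*(1+b)*s0+K).
  assert (E : (s^2-K)*(1+b-s) - (s0^2-K)*(1+b-s0) = fp*h - k*h^2 - h^2*s).
  { unfold fp, h, k. ring. }
  assert (0 <= h^2*s) by (apply Rmult_le_pos; nra).
  assert (4*k*((s^2-K)*(1+b-s) - (s0^2-K)*(1+b-s0)) <= fp^2).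
  { rewrite E.
    assert (E3 : 4*k*(fp*h - k*h^2 - h^2*s) = fp^2 - (fp - 2*k*h)^2 - 4*k*(h^2*s)) by ring.
    rewrite E3. assert (0 <= k*(h^2*s)) by (apply Rmult_le_pos; lra).
    pose proof (pow2_ge_0 (fp - 2*k*h)). lra. }
  assert ((s^2-K)*(1+b-s) - (s0^2-K)*(1+b-s0) <= fp^2/(4*k)).
  { apply (Rmult_le_reg_l (4*k)); [lra|]. replace (4*k*(fp^2/(4*k))) with (fp^2) by (field; lra). lra. }
  lra.
Qed.

Lemma H_max : forall a v y z, 0 <= a -> 2*v <= y^2 -> 0 <= z ->
  Hf a v z y <= Hf a v (-a + sqrt (a^2+y^2-2*v)) y.
Proof.
  intros a v y z Ha Hy Hz.
  assert (HS0 : 0 <= a^2+y^2-2*v) by nra.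
  set (S := sqrt (a^2+y^2-2*v)).
  assert (HS2 : S*S = a^2+y^2-2*v) by (apply sqrt_sqrt; auto).
  assert (HS : 0 <= S) by apply sqrt_pos.
  assert (HSa : a <= S) by nra.
  set (X := -a + S).
  assert (Hv : v = (y^2 - X^2 - 2*a*X)/2) by (unfold X; nra).
  rewrite Hv. unfold Hf, Af.
  set (d := z - X).
  assert (E : (a*z^2/2 + ((y^2 - X^2 - 2*a*X)/2 - y^2/2)*z + z^3/6) - (a*X^2/2 + ((y^2 - X^2 - 2*a*X)/2 - y^2/2)*X + X^3/6) = d^2*(d/3 + X + a)/2).
  { unfold d. field. }
  assert (0 <= d^2*(d/3+X+a)) by (apply Rmult_le_pos; [nra| unfold d, X in *; nra]).
  lra.
Qed.

Fixpoint bs (l : list R) (n : nat) (p q : R) : R :=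
  match l with nil => 0 | c :: l' => c * q ^ n + p * bs l' (Nat.pred n) p q end.

Lemma bs_nonneg : forall l n p q, List.Forall (fun c => 0 <= c) l -> 0 <= p -> 0 <= q -> 0 <= bs l n p q.
Proof.
  induction l as [|c l IH]; intros n p q Hl Hp Hq; simpl. lra.
  inversion Hl; subst. assert (0 <= q ^ n) by (apply pow_le; lra).
  specialize (IH (Nat.pred n) p q H2 Hp Hq). nra.
Qed.

Lemma bs_pos : forall c l n p q, 0 < c -> List.Forall (fun c => 0 <= c) l -> 0 <= p -> 0 < q -> 0 < bs (c :: l) n p q.
Proof.
  intros c l n p q Hc Hl Hp Hq; simpl.
  assert (0 < q ^ n) by (apply pow_lt; lra).
  pose proof (bs_nonneg l (Nat.pred n) p q Hl Hp ltac:(lra)). nra.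
Qed.

Ltac solve_forall := repeat (apply List.Forall_cons; [lra|]); apply List.Forall_nil.
Definition bet (t : R) := 3/2*t^4 + (1-3*t^4)*t^3*(9/5 - 3*t + 3/2*t^2).
Definition ytl (t : R) := 3*t^4 + (1-3*t^4)*t^2*(7/5 - 7/10*t).
Definition xtl (t : R) := (1-3*t^4)*(1 + t^3*(-17/10 + 11/5*t)).
Definition stl (t : R) := 1/2 + t^2 + (1-3*t^4)*(1/2 - t^2 + t^3*(9/10)).

Lemma t_lt : forall t, 0 < t -> 3*t^4 < 1 -> t < 19/25.
Proof.
  intros t H0 H1. destruct (Rlt_or_le t (19/25)) as [H|H]; [exact H|].
  assert ((19/25)^4 <= t^4) by (apply pow_incr; lra). lra.
Qed.
Definition q1 (t : R) : R := (125324) + t * ((-(514468)) + t * ((1121766) + t * ((-(758490)) + t * ((-(1963491)) + t * ((6722085) + t * ((-(14820560)) + t * ((27890236) + t * ((-(38795817)) + t * ((40567851) + t * ((-(37549392)) + t * ((24432024) + t * ((18672507) + t * ((-(85501062)) + t * ((138708459) + t * ((-(145514466)) + t * ((103116645) + t * ((-(44603460)) + t * ((8820900))))))))))))))))))).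
Lemma q1_pos : forall t, 0 <= t -> t < 19/25 -> 0 < q1 t.
Proof.
  intros t H0 H1.
  assert (HE : (60610094979586569553264998830854892730712890625) * q1 t = bs [(72948168963193893432617187500); (1085477601736783981323242187500); (7669195463880896568298339843750); (34414071868732571601867675781250); (110429697481004893779754638671875); (269862990201342999935150146484375); (520646584044252967834472656250000); (808702609399510136032104492187500); (1020071673230067690765380859375000); (1046481438021478028381958007812500); (870762187399422675889025878906250); (584303157430859588275294433593750); (313418819863738263963914082031250); (132572514262898293393946979296875); (43379647849362328472248443968750); (10681473650239370616323217541250); (1902198104702897518768583583000); (226852050769890063920753918310); (14372759941567407410330473011)] 18 (25*t) (19-25*t)) by (unfold q1; cbn [bs Nat.pred]; ring).
  assert (HP : 0 < bs [(72948168963193893432617187500); (1085477601736783981323242187500); (7669195463880896568298339843750); (34414071868732571601867675781250); (110429697481004893779754638671875); (269862990201342999935150146484375); (520646584044252967834472656250000); (808702609399510136032104492187500); (1020071673230067690765380859375000); (1046481438021478028381958007812500); (870762187399422675889025878906250); (584303157430859588275294433593750); (313418819863738263963914082031250); (132572514262898293393946979296875); (43379647849362328472248443968750); (10681473650239370616323217541250); (1902198104702897518768583583000); (226852050769890063920753918310); (14372759941567407410330473011)] 18 (25*t) (19-25*t)) by (apply bs_pos; [lra | solve_forall | lra | lra]).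
  nra.
Qed.

Lemma q1_id : forall t, -(4*(2/3*ytl t - bet t/2)*(Af (bet t) (3/2*t^4) (ytl t) - Hf (bet t) (3/2*t^4) (xtl t) 1) + (bet t*ytl t+3/2*t^4-ytl t^2)^2) = (t^8*(1-3*t^4)^2*q1 t) / 90000.
Proof. intros t. unfold Hf, Af, bet, ytl, xtl, q1. field. Qed.

Lemma q1_fact : forall t, 0 < t -> 3*t^4 < 1 -> 0 < -(4*(2/3*ytl t - bet t/2)*(Af (bet t) (3/2*t^4) (ytl t) - Hf (bet t) (3/2*t^4) (xtl t) 1) + (bet t*ytl t+3/2*t^4-ytl t^2)^2).
Proof.
  intros t H0 H1. rewrite q1_id.
  pose proof (q1_pos t ltac:(lra) (t_lt t H0 H1)).
  assert (0 < t^8) by (apply pow_lt; lra).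
  assert (0 < (1-3*t^4)^2) by (apply pow_lt; lra).
  apply Rdiv_lt_0_compat; [|lra]. repeat apply Rmult_lt_0_compat; lra.
Qed.

Definition q2 (t : R) : R := (3040) + t * ((0) + t * ((-(21600)) + t * ((17496) + t * ((44880) + t * ((-(42720)) + t * ((35835) + t * ((-(373140)) + t * ((644256) + t * ((-(116964)) + t * ((-(717885)) + t * ((1267164) + t * ((-(693144)) + t * ((-(3414636)) + t * ((9405450) + t * ((-(8619372)) + t * ((-(3700728)) + t * ((23577804) + t * ((-(44578350)) + t * ((51007644) + t * ((-(20029032)) + t * ((-(40430340)) + t * ((82023435) + t * ((-(73774800)) + t * ((38053800) + t * ((-(10935000)) + t * ((1366875))))))))))))))))))))))))))).
Lemma q2_pos : forall t, 0 <= t -> t < 19/25 -> 0 < q2 t.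
Proof.
  intros t H0 H1.
  assert (HE : (6282808648723181836699263397354830118501922697760164737701416015625) * q2 t = bs [(10800249583553522825241088867187500000); (280806489172391593456268310546875000000); (3465756890363991260528564453125000000000); (27044153526730951853096485137939453125000); (149911017781778355129063129425048828125000); (628763342450736672617495059967041015625000); (2075380103730984192225150763988494873046875); (5536199730937952431850135326385498046875000); (12164407355023806571168825030326843261718750); (22329397229582468047965317964553833007812500); (34613119834938336671318486332893371582031250); (45681430401385082592691355943679809570312500); (51640148130620438325151402711868286132812500); (50198718260191401205805260124206542968750000); (42034980495704867651434678354263305664062500); (30300681720518030227751129357421875000000000); (18740303728611555254459261726842041015625000); (9882900542249133655154673423116796875000000); (4402495216489328610139818032044433593750000); (1635290494243838060313021558158427500000000); (497869929474114720562344565651206081250000); (121474747063807118473995860664943910000000); (23055083618518017229036855629658946350000); (3268121695328385084234941112368922320000); (325931886900100600012475721258623384800); (20600877175241351755744071465653072000); (633797906302408782787330283993810272)] 26 (25*t) (19-25*t)) by (unfold q2; cbn [bs Nat.pred]; ring).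
  assert (HP : 0 < bs [(10800249583553522825241088867187500000); (280806489172391593456268310546875000000); (3465756890363991260528564453125000000000); (27044153526730951853096485137939453125000); (149911017781778355129063129425048828125000); (628763342450736672617495059967041015625000); (2075380103730984192225150763988494873046875); (5536199730937952431850135326385498046875000); (12164407355023806571168825030326843261718750); (22329397229582468047965317964553833007812500); (34613119834938336671318486332893371582031250); (45681430401385082592691355943679809570312500); (51640148130620438325151402711868286132812500); (50198718260191401205805260124206542968750000); (42034980495704867651434678354263305664062500); (30300681720518030227751129357421875000000000); (18740303728611555254459261726842041015625000); (9882900542249133655154673423116796875000000); (4402495216489328610139818032044433593750000); (1635290494243838060313021558158427500000000); (497869929474114720562344565651206081250000); (121474747063807118473995860664943910000000); (23055083618518017229036855629658946350000); (3268121695328385084234941112368922320000); (325931886900100600012475721258623384800); (20600877175241351755744071465653072000); (633797906302408782787330283993810272)] 26 (25*t) (19-25*t)) by (apply bs_pos; [lra | solve_forall | lra | lra]).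
  nra.
Qed.

Lemma q2_id : forall t, -(4*(2*stl t-1-bet t)*((stl t^2-(bet t^2+1-3*t^4))*(1+bet t-stl t) - 2*t^6) + (-3*stl t^2+2*(1+bet t)*stl t+(bet t^2+1-3*t^4))^2) = (t^6*(1-3*t^4)^1*q2 t) / 2000.
Proof. intros t. unfold bet, stl, q2. field. Qed.

Lemma q2_fact : forall t, 0 < t -> 3*t^4 < 1 -> 0 < -(4*(2*stl t-1-bet t)*((stl t^2-(bet t^2+1-3*t^4))*(1+bet t-stl t) - 2*t^6) + (-3*stl t^2+2*(1+bet t)*stl t+(bet t^2+1-3*t^4))^2).
Proof.
  intros t H0 H1. rewrite q2_id.
  pose proof (q2_pos t ltac:(lra) (t_lt t H0 H1)).
  assert (0 < t^6) by (apply pow_lt; lra).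
  assert (0 < (1-3*t^4)^1) by (apply pow_lt; lra).
  apply Rdiv_lt_0_compat; [|lra]. repeat apply Rmult_lt_0_compat; lra.
Qed.

Definition q3 (t : R) : R := (75) + t * ((0) + t * ((-(324)) + t * ((540) + t * ((-(540)) + t * ((450) + t * ((747) + t * ((-(3240)) + t * ((4320) + t * ((-(2700)) + t * ((675))))))))))).
Lemma q3_pos : forall t, 0 <= t -> t < 19/25 -> 0 < q3 t.
Proof.
  intros t H0 H1.
  assert (HE : (23388161688999176025390625) * q3 t = bs [(286102294921875); (2861022949218750); (12160711669921875); (29525405273437500); (45735116308593750); (47421179121093750); (34175041962609375); (16997629141462500); (5617713923956125); (1095926587615200); (92015701785327)] 10 (25*t) (19-25*t)) by (unfold q3; cbn [bs Nat.pred]; ring).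
  assert (HP : 0 < bs [(286102294921875); (2861022949218750); (12160711669921875); (29525405273437500); (45735116308593750); (47421179121093750); (34175041962609375); (16997629141462500); (5617713923956125); (1095926587615200); (92015701785327)] 10 (25*t) (19-25*t)) by (apply bs_pos; [lra | solve_forall | lra | lra]).
  nra.
Qed.

Lemma q3_id : forall t, 3/4*t^4 - bet t^2 = (t^4*(1-3*t^4)^1*q3 t) / 100.
Proof. intros t. unfold bet, q3. field. Qed.

Lemma q3_fact : forall t, 0 < t -> 3*t^4 < 1 -> 0 < 3/4*t^4 - bet t^2.
Proof.
  intros t H0 H1. rewrite q3_id.
  pose proof (q3_pos t ltac:(lra) (t_lt t H0 H1)).
  assert (0 < t^4) by (apply pow_lt; lra).
  assert (0 < (1-3*t^4)^1) by (apply pow_lt; lra).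
  apply Rdiv_lt_0_compat; [|lra]. repeat apply Rmult_lt_0_compat; lra.
Qed.

Definition qk (t : R) : R := (56) + t * ((-(82)) + t * ((165) + t * ((-(45)) + t * ((-(168)) + t * ((246) + t * ((-(270)) + t * ((135)))))))).
Lemma qk_pos : forall t, 0 <= t -> t < 19/25 -> 0 < qk t.
Proof.
  intros t H0 H1.
  assert (HE : (1091152025146484375) * qk t = bs [(68359375000); (402441406250); (1095439453125); (1809040625000); (1869599443750); (1184014938000); (390817652275); (52853491853)] 7 (25*t) (19-25*t)) by (unfold qk; cbn [bs Nat.pred]; ring).
  assert (HP : 0 < bs [(68359375000); (402441406250); (1095439453125); (1809040625000); (1869599443750); (1184014938000); (390817652275); (52853491853)] 7 (25*t) (19-25*t)) by (apply bs_pos; [lra | solve_forall | lra | lra]).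
  nra.
Qed.

Lemma qk_id : forall t, 2/3*ytl t - bet t/2 = (t^2*(1-3*t^4)^0*qk t) / 60.
Proof. intros t. unfold bet, ytl, qk. field. Qed.

Lemma qk_fact : forall t, 0 < t -> 3*t^4 < 1 -> 0 < 2/3*ytl t - bet t/2.
Proof.
  intros t H0 H1. rewrite qk_id.
  pose proof (qk_pos t ltac:(lra) (t_lt t H0 H1)).
  assert (0 < t^2) by (apply pow_lt; lra).
  assert (0 < (1-3*t^4)^0) by (apply pow_lt; lra).
  apply Rdiv_lt_0_compat; [|lra]. repeat apply Rmult_lt_0_compat; lra.
Qed.

Definition qkp (t : R) : R := (2) + t * ((0) + t * ((0) + t * ((0) + t * ((-(3)) + t * ((-(3)) + t * ((12) + t * ((0) + t * ((-(18)) + t * ((9)))))))))).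
Lemma qkp_pos : forall t, 0 <= t -> t < 19/25 -> 0 < qkp t.
Proof.
  intros t H0 H1.
  assert (HE : (1230955878368377685546875) * qkp t = bs [(7629394531250); (68664550781250); (274658203125000); (640869140625000); (957485712890625); (939312042187500); (599903548781250); (245531459625000); (56788551178425); (4992406567811)] 9 (25*t) (19-25*t)) by (unfold qkp; cbn [bs Nat.pred]; ring).
  assert (HP : 0 < bs [(7629394531250); (68664550781250); (274658203125000); (640869140625000); (957485712890625); (939312042187500); (599903548781250); (245531459625000); (56788551178425); (4992406567811)] 9 (25*t) (19-25*t)) by (apply bs_pos; [lra | solve_forall | lra | lra]).
  nra.
Qed.

Lemma qkp_id : forall t, 2*stl t-1-bet t = (t^0*(1-3*t^4)^0*qkp t) / 2.
Proof. intros t. unfold bet, stl, qkp. field. Qed.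

Lemma qkp_fact : forall t, 0 < t -> 3*t^4 < 1 -> 0 < 2*stl t-1-bet t.
Proof.
  intros t H0 H1. rewrite qkp_id.
  pose proof (qkp_pos t ltac:(lra) (t_lt t H0 H1)).
  assert (0 < t^0) by (apply pow_lt; lra).
  assert (0 < (1-3*t^4)^0) by (apply pow_lt; lra).
  apply Rdiv_lt_0_compat; [|lra]. repeat apply Rmult_lt_0_compat; lra.
Qed.

Definition qx (t : R) : R := (10) + t * ((0) + t * ((0) + t * ((-(17)) + t * ((22))))).
Lemma qx_pos : forall t, 0 <= t -> t < 19/25 -> 0 < qx t.
Proof.
  intros t H0 H1.
  assert (HE : (50906640625) * qx t = bs [(3906250); (15625000); (23437500); (12709925); (3858237)] 4 (25*t) (19-25*t)) by (unfold qx; cbn [bs Nat.pred]; ring).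
  assert (HP : 0 < bs [(3906250); (15625000); (23437500); (12709925); (3858237)] 4 (25*t) (19-25*t)) by (apply bs_pos; [lra | solve_forall | lra | lra]).
  nra.
Qed.

Lemma qx_id : forall t, 3*t^4 < 1 -> xtl t / (1-3*t^4) = (t^0*(1-3*t^4)^0*qx t) / 10.
Proof. intros t Ht. unfold xtl, qx. field. lra. Qed.

Lemma qx_fact : forall t, 0 < t -> 3*t^4 < 1 -> 0 < xtl t / (1-3*t^4).
Proof.
  intros t H0 H1. rewrite qx_id by lra.
  pose proof (qx_pos t ltac:(lra) (t_lt t H0 H1)).
  assert (0 < t^0) by (apply pow_lt; lra).
  assert (0 < (1-3*t^4)^0) by (apply pow_lt; lra).
  apply Rdiv_lt_0_compat; [|lra]. repeat apply Rmult_lt_0_compat; lra.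
Qed.

Definition qb (t : R) : R := (18) + t * ((-(15)) + t * ((15) + t * ((0) + t * ((-(54)) + t * ((90) + t * ((-(45)))))))).
Lemma qb_pos : forall t, 0 <= t -> t < 19/25 -> 0 < qb t.
Proof.
  intros t H0 H1.
  assert (HE : (2297162158203125) * qb t = bs [(878906250); (4716796875); (10823437500); (13703906250); (9275802000); (3537332925); (556477371)] 6 (25*t) (19-25*t)) by (unfold qb; cbn [bs Nat.pred]; ring).
  assert (HP : 0 < bs [(878906250); (4716796875); (10823437500); (13703906250); (9275802000); (3537332925); (556477371)] 6 (25*t) (19-25*t)) by (apply bs_pos; [lra | solve_forall | lra | lra]).
  nra.
Qed.

Lemma qb_id : forall t, bet t = (t^3*(1-3*t^4)^0*qb t) / 10.
Proof. intros t. unfold bet, qb. field. Qed.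

Lemma qb_fact : forall t, 0 < t -> 3*t^4 < 1 -> 0 < bet t.
Proof.
  intros t H0 H1. rewrite qb_id.
  pose proof (qb_pos t ltac:(lra) (t_lt t H0 H1)).
  assert (0 < t^3) by (apply pow_lt; lra).
  assert (0 < (1-3*t^4)^0) by (apply pow_lt; lra).
  apply Rdiv_lt_0_compat; [|lra]. repeat apply Rmult_lt_0_compat; lra.
Qed.


Section Conv.
Variables a v : R.
Definition Sq (y : R) := sqrt (a^2+y^2-2*v).
Definition Bf (y : R) := Hf a v (-a + Sq y) y.
Definition gf (y : R) := v - y^2 + y * Sq y.

Lemma Bf_deriv : forall y, 2*v < y^2 -> is_derive Bf y (gf y).
Proof.
  intros y Hy. unfold Bf, gf, Sq, Hf, Af.
  assert (Hp : 0 < a^2+y^2-2*v) by nra.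
  auto_derive.
  - repeat split; nra.
  - replace (a*(a*1)+y*(y*1)+-(2*v)) with (a^2+y^2-2*v) by ring.
    assert (HS := sqrt_sqrt _ (Rlt_le _ _ Hp)).
    assert (HSp := sqrt_lt_R0 _ Hp).
    set (S := sqrt (a^2+y^2-2*v)) in *.
    field_simplify_eq; [|lra].
    replace (S^2) with (S*S) by ring. rewrite HS. ring.
Qed.
End Conv.
Lemma cplus : forall (f g : R -> R) (x : R), continuous f x -> continuous g x -> continuous (fun y => f y + g y) x.
Proof. intros f g x Hf Hg. apply (continuous_plus f g x Hf Hg). Qed.
Lemma cminus : forall (f g : R -> R) (x : R), continuous f x -> continuous g x -> continuous (fun y => f y - g y) x.
Proof. intros f g x Hf Hg. apply (continuous_minus f g x Hf Hg). Qed.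
Lemma cmult : forall (f g : R -> R) (x : R), continuous f x -> continuous g x -> continuous (fun y => f y * g y) x.
Proof. intros f g x Hf Hg. apply (continuous_mult f g x Hf Hg). Qed.
Lemma copp : forall (f : R -> R) (x : R), continuous f x -> continuous (fun y => - f y) x.
Proof. intros f x Hf. apply (continuous_opp f x Hf). Qed.
Lemma cdiv : forall (f : R -> R) (c x : R), continuous f x -> continuous (fun y => f y / c) x.
Proof. intros f c x Hf. unfold Rdiv. apply cmult; [exact Hf | apply continuous_const]. Qed.
Lemma cpow : forall (f : R -> R) (n : nat) (x : R), continuous f x -> continuous (fun y => f y ^ n) x.
Proof.
  intros f n x Hf. induction n as [|n IH]; simpl.
  - apply continuous_const.
  - apply cmult; assumption.
Qed.
Lemma csqrt : forall (f : R -> R) (x : R), continuous f x -> continuous (fun y => sqrt (f y)) x.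
Proof. intros f x Hf. apply (continuous_comp f sqrt x Hf (continuous_sqrt (f x))). Qed.

Ltac cont := lazymatch goal with
  | |- continuous (fun y => y) _ => apply continuous_id
  | |- continuous (Rmult ?c) ?x => apply (cmult (fun _ => c) (fun y => y) x); [apply continuous_const | apply continuous_id]
  | |- continuous (Rplus ?c) ?x => apply (cplus (fun _ => c) (fun y => y) x); [apply continuous_const | apply continuous_id]
  | |- continuous (fun y => _ + _) _ => apply cplus; cont
  | |- continuous (fun y => _ - _) _ => apply cminus; cont
  | |- continuous (fun y => _ * _) _ => apply cmult; cont
  | |- continuous (fun y => _ / _) _ => apply cdiv; cont
  | |- continuous (fun y => - _) _ => apply copp; cont
  | |- continuous (fun y => _ ^ _) _ => apply cpow; cont
  | |- continuous (fun y => sqrt _) _ => apply csqrt; cont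
  | |- continuous (fun _ => _) _ => apply continuous_const
  | |- ?g => idtac g; fail
  end.

Lemma Bf_cont : forall a v y, continuity_pt (Bf a v) y.
Proof.
  intros a v y. apply continuity_pt_filterlim. change (continuous (Bf a v) y). unfold Bf, Sq, Hf, Af. cont.
Qed.
Lemma gf_mono : forall a v y1 y2, 0 < y1 -> y1 <= y2 -> 2*v <= y1^2 -> gf a v y1 <= gf a v y2.
Proof.
  intros a v y1 y2 H1 H12 Hc. unfold gf, Sq.
  assert (P1 : 0 <= a^2+y1^2-2*v) by nra.
  assert (P2 : 0 <= a^2+y2^2-2*v) by nra.
  assert (E1 := sqrt_sqrt _ P1). assert (E2 := sqrt_sqrt _ P2).
  assert (N1 := sqrt_pos (a^2+y1^2-2*v)). assert (N2 := sqrt_pos (a^2+y2^2-2*v)).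
  set (S1 := sqrt (a^2+y1^2-2*v)) in *. set (S2 := sqrt (a^2+y2^2-2*v)) in *.
  set (K := a^2 - 2*v).
  assert (Id : ((y2*S2 - y2^2) - (y1*S1 - y1^2)) * ((S1+y1)*(S2+y2)) = K*(y2*S1 - y1*S2)).
  { assert (A2 : (y2*S2 - y2^2)*(S2+y2) = y2*K).
    { replace ((y2*S2 - y2^2)*(S2+y2)) with (y2*(S2*S2) - y2^3) by ring. rewrite E2. unfold K; ring. }
    assert (A1 : (y1*S1 - y1^2)*(S1+y1) = y1*K).
    { replace ((y1*S1 - y1^2)*(S1+y1)) with (y1*(S1*S1) - y1^3) by ring. rewrite E1. unfold K; ring. }
    replace (((y2*S2 - y2^2) - (y1*S1 - y1^2)) * ((S1+y1)*(S2+y2))) with ((S1+y1)*((y2*S2 - y2^2)*(S2+y2)) - (S2+y2)*((y1*S1 - y1^2)*(S1+y1))) by ring.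
    rewrite A1, A2. ring. }
  assert (Sg : 0 <= K*(y2*S1 - y1*S2)).
  { assert (Q : K*(y2*S1 - y1*S2)*(y2*S1 + y1*S2) = K^2*(y2^2-y1^2)).
    { replace (K*(y2*S1 - y1*S2)*(y2*S1 + y1*S2)) with (K*(y2^2*(S1*S1) - y1^2*(S2*S2))) by ring.
      rewrite E1, E2. unfold K; ring. }
    assert (0 <= K^2*(y2^2-y1^2)) by (apply Rmult_le_pos; nra).
    destruct (Req_dec (y2*S1 + y1*S2) 0) as [Z|Z].
    - assert (0 <= y2*S1) by (apply Rmult_le_pos; lra).
      assert (0 <= y1*S2) by (apply Rmult_le_pos; lra).
      replace (y2*S1 - y1*S2) with 0 by lra. lra.
    - assert (0 <= y2*S1) by (apply Rmult_le_pos; lra).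
      assert (0 <= y1*S2) by (apply Rmult_le_pos; lra).
      assert (0 < y2*S1 + y1*S2) by lra.
      apply (Rmult_le_reg_r (y2*S1 + y1*S2)); [lra|]. rewrite Q. lra. }
  assert (0 < (S1+y1)*(S2+y2)) by (apply Rmult_lt_0_compat; lra).
  assert (0 <= (y2*S2 - y2^2) - (y1*S1 - y1^2)).
  { apply (Rmult_le_reg_r ((S1+y1)*(S2+y2))); [lra|]. rewrite Id. lra. }
  lra.
Qed.

Lemma sqrt2v_sq : forall v, 0 <= v -> sqrt (2*v) ^ 2 = 2*v.
Proof. intros v Hv. simpl. rewrite Rmult_1_r. apply sqrt_sqrt. lra. Qed.

Lemma Bf_conv : forall a v y, 0 < v -> 2*v < 1 -> sqrt (2*v) <= y <= 1 ->
  Bf a v y <= Rmax (Bf a v (sqrt (2*v))) (Bf a v 1).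
Proof.
  intros a v y Hv Hv1 [Hy1 Hy2].
  set (c := sqrt (2*v)) in *.
  assert (Hc2 : c^2 = 2*v) by (apply sqrt2v_sq; lra).
  assert (Hc0 : 0 < c) by (apply sqrt_lt_R0; lra).
  destruct (Rle_or_lt (gf a v y) 0) as [Hg|Hg].
  - destruct (MVT_gen (Bf a v) c y (gf a v)) as [xi [Hxi Heq]].
    + intros x Hx. rewrite Rmin_left in Hx by lra. rewrite Rmax_right in Hx by lra.
      apply Bf_deriv. nra.
    + intros x _. apply Bf_cont.
    + rewrite Rmin_left in Hxi by lra. rewrite Rmax_right in Hxi by lra.
      assert (gf a v xi <= gf a v y) by (apply gf_mono; nra).
      assert (Bf a v y <= Bf a v c) by nra.
      apply Rle_trans with (Bf a v c); [lra | apply Rmax_l].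
  - destruct (MVT_gen (Bf a v) y 1 (gf a v)) as [xi [Hxi Heq]].
    + intros x Hx. rewrite Rmin_left in Hx by lra. rewrite Rmax_right in Hx by lra.
      apply Bf_deriv. nra.
    + intros x _. apply Bf_cont.
    + rewrite Rmin_left in Hxi by lra. rewrite Rmax_right in Hxi by lra.
      assert (gf a v y <= gf a v xi) by (apply gf_mono; nra).
      assert (Bf a v y <= Bf a v 1) by nra.
      apply Rle_trans with (Bf a v 1); [lra | apply Rmax_r].
Qed.

Lemma W_hi : forall a v y, sqrt (2*v) <= y -> W a v y = Bf a v y.
Proof.
  intros a v y Hy. rewrite W_eq. unfold xA, Bf, Sq.
  destruct (Rlt_dec y (sqrt (2*v))) as [H|H]; [lra | reflexivity].
Qed.

Lemma W_lo : forall a v y, y < sqrt (2*v) -> W a v y = Af a v y.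
Proof.
  intros a v y Hy. rewrite W_eq. unfold xA.
  destruct (Rlt_dec y (sqrt (2*v))) as [H|H]; [|lra]. unfold Hf. field.
Qed.

Lemma Bf_c : forall a v, 0 <= a -> 0 <= v -> Bf a v (sqrt (2*v)) = Af a v (sqrt (2*v)).
Proof.
  intros a v Ha Hv. unfold Bf, Sq. rewrite sqrt2v_sq by lra.
  replace (a^2 + 2*v - 2*v) with (a^2) by ring. rewrite sqrt_pow2 by lra.
  unfold Hf. field.
Qed.
Definition ym (a v : R) := Rmin (yP a v) (sqrt (2*v)).
Definition Mm (a v : R) := Af a v (ym a v).
Definition W1 (a v : R) := W a v 1.
Definition Phi (a v : R) := Mm a v - W1 a v.

Lemma yP_facts : forall a v, 0 <= a -> 0 < v ->
  0 < yP a v /\ a <= yP a v /\ yP a v ^ 2 = a * yP a v + v.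
Proof.
  intros a v Ha Hv. unfold yP.
  assert (H0 : 0 <= a^2 + 4*v) by nra.
  assert (E := sqrt_sqrt _ H0). assert (P := sqrt_pos (a^2+4*v)).
  assert (a <= sqrt (a^2+4*v)).
  { apply Rsqr_incr_0_var; [unfold Rsqr; nra | lra]. }
  assert (0 < sqrt (a^2+4*v)).
  { apply sqrt_lt_R0. nra. }
  repeat split; [lra | lra | ]. nra.
Qed.

Lemma A_le_yP : forall a v y, 0 <= a -> 0 < v -> 0 <= y -> Af a v y <= Af a v (yP a v).
Proof.
  intros a v y Ha Hv Hy. destruct (yP_facts a v Ha Hv) as [P1 [P2 P3]].
  set (p := yP a v) in *.
  assert (Hv' : v = p^2 - a*p) by lra.
  assert (E : Af a v p - Af a v y = (p-y)^2*(2*p + y - 3*a/2)/3).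
  { unfold Af. rewrite Hv'. field. }
  assert (0 <= (p-y)^2*(2*p + y - 3*a/2)) by (apply Rmult_le_pos; [apply pow2_ge_0 | lra]).
  lra.
Qed.

Lemma A_le_c : forall a v c y, 0 <= a -> 0 < v -> 0 <= y -> y <= c -> c <= yP a v ->
  Af a v y <= Af a v c.
Proof.
  intros a v c y Ha Hv Hy Hyc Hc. destruct (yP_facts a v Ha Hv) as [P1 [P2 P3]].
  set (p := yP a v) in *.
  assert (Hv' : v = p^2 - a*p) by lra.
  assert (Dc : 0 <= a*c + v - c^2) by (rewrite Hv'; nra).
  assert (Dy : 0 <= a*y + v - y^2) by (rewrite Hv'; nra).
  assert (E : Af a v c - Af a v y = (c-y)*((a*c + v - c^2 + (a*y + v - y^2))/2 + (c-y)^2/6)).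
  { unfold Af. field. }
  assert (0 <= (c-y)*((a*c + v - c^2 + (a*y + v - y^2))/2 + (c-y)^2/6)).
  { apply Rmult_le_pos; [lra|]. pose proof (pow2_ge_0 (c-y)). lra. }
  lra.
Qed.

Lemma ym_range : forall a v, 0 <= a -> 0 < v -> 0 <= ym a v <= sqrt (2*v).
Proof.
  intros a v Ha Hv. unfold ym. destruct (yP_facts a v Ha Hv) as [P1 _].
  assert (0 <= sqrt (2*v)) by apply sqrt_pos.
  split; [apply Rmin_glb; lra | apply Rmin_r].
Qed.

Lemma M_ge : forall a v y, 0 <= a -> 0 < v -> 0 <= y <= sqrt (2*v) -> Af a v y <= Mm a v.
Proof.
  intros a v y Ha Hv [Hy1 Hy2]. unfold Mm, ym.
  destruct (Rle_or_lt (yP a v) (sqrt (2*v))) as [H|H].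
  - rewrite Rmin_left by lra. apply A_le_yP; lra.
  - rewrite Rmin_right by lra. apply A_le_c; lra.
Qed.

Lemma W_ym : forall a v, 0 <= a -> 0 < v -> W a v (ym a v) = Mm a v.
Proof.
  intros a v Ha Hv. destruct (ym_range a v Ha Hv) as [H1 H2].
  destruct (Rlt_or_le (ym a v) (sqrt (2*v))) as [H|H].
  - rewrite W_lo by lra. reflexivity.
  - assert (E : ym a v = sqrt (2*v)) by lra. rewrite E. rewrite W_hi by lra.
    rewrite Bf_c by lra. unfold Mm. rewrite E. reflexivity.
Qed.

Lemma c_lt_1 : forall v, 0 < v -> 2*v < 1 -> sqrt (2*v) < 1.
Proof.
  intros v Hv Hv1. rewrite <- sqrt_1. apply sqrt_lt_1; lra.
Qed.

Lemma W_le_max : forall a v y, 0 <= a -> 0 < v -> 2*v < 1 -> 0 <= y <= 1 ->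
  W a v y <= Rmax (Mm a v) (W1 a v).
Proof.
  intros a v y Ha Hv Hv1 [Hy1 Hy2].
  assert (Hc1 := c_lt_1 v Hv Hv1).
  destruct (Rlt_or_le y (sqrt (2*v))) as [H|H].
  - rewrite W_lo by lra. apply Rle_trans with (Mm a v); [apply M_ge; lra | apply Rmax_l].
  - rewrite W_hi by lra.
    apply Rle_trans with (Rmax (Bf a v (sqrt (2*v))) (Bf a v 1)); [apply Bf_conv; lra|].
    rewrite Bf_c by lra.
    assert (Af a v (sqrt (2*v)) <= Mm a v) by (apply M_ge; [lra|lra|split; [apply sqrt_pos|lra]]).
    assert (E : Bf a v 1 = W1 a v) by (unfold W1; rewrite W_hi by lra; reflexivity).
    rewrite E. apply Rmax_lub; [apply Rle_trans with (Mm a v); [lra|apply Rmax_l] | apply Rmax_r].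
Qed.

Definition X1 (a v : R) := -a + sqrt (a^2+1^2-2*v).

Lemma X1_facts : forall a v, 0 <= a -> 2*v <= 1 -> 0 <= X1 a v /\ X1 a v ^2 + 2*a*X1 a v = 1 - 2*v.
Proof.
  intros a v Ha Hv. unfold X1.
  assert (H0 : 0 <= a^2+1^2-2*v) by nra.
  assert (E := sqrt_sqrt _ H0). assert (P := sqrt_pos (a^2+1^2-2*v)).
  assert (a <= sqrt (a^2+1^2-2*v)).
  { apply Rsqr_incr_0_var; [unfold Rsqr; nra | lra]. }
  split; [lra|]. nra.
Qed.

Lemma W1_eq : forall a v, 0 < v -> 2*v < 1 -> W1 a v = Hf a v (X1 a v) 1.
Proof.
  intros a v Hv Hv1. unfold W1. rewrite W_hi by (pose proof (c_lt_1 v Hv Hv1); lra). reflexivity.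
Qed.

Lemma W1_ge : forall a v z, 0 <= a -> 0 < v -> 2*v < 1 -> 0 <= z -> Hf a v z 1 <= W1 a v.
Proof.
  intros a v z Ha Hv Hv1 Hz. rewrite W1_eq by lra. unfold X1. apply H_max; lra.
Qed.

Lemma Hf_lin : forall a1 a2 v z y, Hf a2 v z y = Hf a1 v z y + (a2-a1)*(y^2-z^2)/2.
Proof. intros. unfold Hf, Af. field. Qed.
Lemma Af_lin : forall a1 a2 v y, Af a2 v y = Af a1 v y + (a2-a1)*y^2/2.
Proof. intros. unfold Af. field. Qed.

Lemma Phi_mono : forall a1 a2 v, 0 <= a1 <= a2 -> 0 < v -> 2*v < 1 -> Phi a2 v <= Phi a1 v.
Proof.
  intros a1 a2 v [H1 H2] Hv Hv1. unfold Phi.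
  destruct (ym_range a2 v ltac:(lra) Hv) as [R1 R2].
  assert (Hy2 : ym a2 v ^ 2 <= 2*v).
  { rewrite <- (sqrt2v_sq v) by lra. apply pow_incr. lra. }
  assert (M1 : Mm a2 v <= Mm a1 v + (a2-a1)*v).
  { unfold Mm at 1. rewrite (Af_lin a1 a2).
    assert (Af a1 v (ym a2 v) <= Mm a1 v) by (apply M_ge; lra).
    assert ((a2-a1)*ym a2 v^2/2 <= (a2-a1)*v) by nra. lra. }
  destruct (X1_facts a1 v H1 ltac:(lra)) as [XP XE].
  assert (M2 : W1 a1 v + (a2-a1)*v <= W1 a2 v).
  { apply Rle_trans with (Hf a2 v (X1 a1 v) 1); [|apply W1_ge; lra].
    rewrite (Hf_lin a1 a2). rewrite <- W1_eq by lra.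
    assert (0 <= (a2-a1)*(2*a1*X1 a1 v)) by (apply Rmult_le_pos; nra).
    assert (1^2 - X1 a1 v^2 = 2*a1*X1 a1 v + 2*v) by lra. nra. }
  lra.
Qed.

Lemma Phi_lip : forall a1 a2 v, 0 <= a1 <= a2 -> 0 < v -> 2*v < 1 -> Phi a1 v <= Phi a2 v + (a2-a1)/2.
Proof.
  intros a1 a2 v [H1 H2] Hv Hv1. unfold Phi.
  destruct (ym_range a1 v ltac:(lra) Hv) as [R1 R2].
  assert (M1 : Mm a1 v <= Mm a2 v).
  { unfold Mm at 1. apply Rle_trans with (Af a2 v (ym a1 v)).
    - rewrite (Af_lin a1 a2). assert (0 <= (a2-a1)*ym a1 v^2/2) by (apply Rmult_le_pos; nra). lra.
    - apply M_ge; lra. }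
  destruct (X1_facts a2 v ltac:(lra) ltac:(lra)) as [XP XE].
  assert (M2 : W1 a2 v - (a2-a1)/2 <= W1 a1 v).
  { apply Rle_trans with (Hf a1 v (X1 a2 v) 1); [|apply W1_ge; lra].
    rewrite (Hf_lin a2 a1). rewrite <- W1_eq by lra.
    assert (0 <= (a2-a1)*X1 a2 v^2) by (apply Rmult_le_pos; nra). nra. }
  lra.
Qed.
Definition Eset (a v : R) := (fun z => exists p, 0 <= p /\
          z = p * (1 + a - sqrt (a ^ 2 + 1 - 2 * (v - p)))).

Lemma PiS_unfold : forall v a, PiS v a = real (Lub_Rbar (Eset a v)).
Proof. reflexivity. Qed.

Lemma val_bound : forall a v p, 0 <= a <= 1 -> 2*v < 1 -> 0 <= p ->
  p * (1 + a - sqrt (a ^ 2 + 1 - 2 * (v - p))) <= 1.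
Proof.
  intros a v p Ha Hv Hp.
  assert (H0 : 0 <= a ^ 2 + 1 - 2 * (v - p)) by nra.
  assert (E := sqrt_sqrt _ H0). assert (P := sqrt_pos (a ^ 2 + 1 - 2 * (v - p))).
  set (s := sqrt (a ^ 2 + 1 - 2 * (v - p))) in *.
  destruct (Rle_or_lt (1 + a) s) as [H|H].
  - assert (p * (1 + a - s) <= 0) by nra. lra.
  - assert (Hp2 : p <= s*s/2) by nra.
    assert (p * (1 + a - s) <= s*s/2 * (2 - s)) by nra.
    assert (0 <= (s-4/3)^2*(s+2/3)) by (apply Rmult_le_pos; [apply pow2_ge_0|lra]).
    assert (s*s/2*(2-s) = 1 - ((s-4/3)^2*(s+2/3) + 22/27)/2) by field. lra.
Qed.

Lemma Lub_fin : forall (E : R -> Prop) (z0 B : R), E z0 -> (forall z, E z -> z <= B) ->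
  Lub_Rbar E = Finite (real (Lub_Rbar E)) /\ z0 <= real (Lub_Rbar E) <= B.
Proof.
  intros E z0 B H0 HB.
  destruct (Lub_Rbar_correct E) as [Hub Hl].
  assert (L1 : Rbar_le (Lub_Rbar E) (Finite B)) by (apply Hl; intros z Hz; simpl; apply HB; auto).
  assert (L2 : Rbar_le (Finite z0) (Lub_Rbar E)) by (apply Hub; auto).
  destruct (Lub_Rbar E) as [r| |]; simpl in *; try contradiction.
  split; [reflexivity | lra].
Qed.

Lemma PiS_le : forall v a B, 0 <= a <= 1 -> 2*v < 1 ->
  (forall p, 0 <= p -> p * (1 + a - sqrt (a ^ 2 + 1 - 2 * (v - p))) <= B) -> PiS v a <= B.
Proof.
  intros v a B Ha Hv HB. rewrite PiS_unfold.
  assert (Hz : Eset a v 0) by (exists 0; split; [lra | ring]).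
  destruct (Lub_fin (Eset a v) 0 1 Hz) as [Hf _].
  { intros z [p [Hp Ez]]. rewrite Ez. apply val_bound; auto. }
  destruct (Lub_Rbar_correct (Eset a v)) as [Hub Hl].
  assert (L1 : Rbar_le (Lub_Rbar (Eset a v)) (Finite B)).
  { apply Hl. intros z [p [Hp Ez]]. simpl. rewrite Ez. apply HB; auto. }
  rewrite Hf in L1. simpl in L1. exact L1.
Qed.

Lemma PiS_ge : forall v a p, 0 <= a <= 1 -> 2*v < 1 -> 0 <= p ->
  p * (1 + a - sqrt (a ^ 2 + 1 - 2 * (v - p))) <= PiS v a.
Proof.
  intros v a p Ha Hv Hp. rewrite PiS_unfold.
  assert (Hz : Eset a v (p * (1 + a - sqrt (a ^ 2 + 1 - 2 * (v - p))))) by (exists p; split; [lra | reflexivity]).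
  destruct (Lub_fin (Eset a v) _ 1 Hz) as [_ [H1 _]]; [|exact H1].
  intros z [q [Hq Ez]]. rewrite Ez. apply val_bound; auto.
Qed.

Lemma alphaS_bounds : forall v L a0, (0 <= a0 /\ subs_moderated_profit v <= PiS v a0) ->
  (forall a, 0 <= a /\ subs_moderated_profit v <= PiS v a -> L <= a) ->
  L <= alphaS v <= a0.
Proof.
  intros v L a0 H0 HL. unfold alphaS.
  set (SS := fun alpha => 0 <= alpha /\ subs_moderated_profit v <= PiS v alpha).
  destruct (Glb_Rbar_correct SS) as [Hlb Hg].
  assert (G1 : Rbar_le (Glb_Rbar SS) (Finite a0)) by (apply Hlb; exact H0).
  assert (G2 : Rbar_le (Finite L) (Glb_Rbar SS)) by (apply Hg; intros z Hz; simpl; apply HL; exact Hz).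
  destruct (Glb_Rbar SS) as [r| |]; simpl in *; try contradiction. lra.
Qed.
Lemma t_exists : forall v, 0 < v -> exists t, 0 < t /\ v = 3/2*t^4.
Proof.
  intros v Hv. exists (sqrt (sqrt (2*v/3))).
  assert (H1 : 0 < sqrt (2*v/3)) by (apply sqrt_lt_R0; lra).
  split; [apply sqrt_lt_R0; lra|].
  replace (sqrt (sqrt (2*v/3)) ^ 4) with ((sqrt (sqrt (2*v/3)) * sqrt (sqrt (2*v/3))) * (sqrt (sqrt (2*v/3)) * sqrt (sqrt (2*v/3)))) by ring.
  rewrite sqrt_sqrt by lra. rewrite sqrt_sqrt by lra. field.
Qed.

Theorem proposition7 (v : R) (hv : 0 < v < 1 / 2) :
  exists alphaP : R,
    (forall alpha, 0 <= alpha <= 1 -> alpha < alphaP ->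
        planner_optimal alpha v (yP alpha v)) /\
    (forall alpha, 0 <= alpha <= 1 -> alphaP < alpha ->
        planner_optimal alpha v 1) /\
    alphaP < alphaS v /\ alphaS v < alphaA v /\
    (forall alpha, 0 <= alpha <= 1 -> alpha < alphaP ->
        yS v < yP alpha v /\ yP alpha v < yA v).
Proof.
  destruct hv as [Hv0 Hv1].
  destruct (t_exists v Hv0) as [t [Ht Hvt]].
  assert (Ht4 : 3*t^4 < 1) by lra.
  assert (Hv2 : 2*v < 1) by lra.
  pose proof (t_lt t Ht Ht4) as Ht19.
  pose proof (qb_fact t Ht Ht4) as Hb0.
  pose proof (q3_fact t Ht Ht4) as Hb3.
  pose proof (qk_fact t Ht Ht4) as Hk.
  pose proof (qkp_fact t Ht Ht4) as Hkp.
  pose proof (qx_fact t Ht Ht4) as Hx.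
  pose proof (q1_fact t Ht Ht4) as HN1.
  pose proof (q2_fact t Ht Ht4) as HN2.
  set (b := bet t) in *.
  set (s0 := stl t) in *.
  assert (HE : 0 < 1 - 3*t^4) by lra.
  assert (Hxt : 0 <= xtl t).
  { assert (0 < xtl t / (1 - 3*t^4) * (1 - 3*t^4)) by (apply Rmult_lt_0_compat; lra).
    replace (xtl t / (1 - 3*t^4) * (1 - 3*t^4)) with (xtl t) in H by (field; lra). lra. }
  assert (Hyt : 0 <= ytl t).
  { unfold ytl. assert (0 <= t^4) by (apply pow_le; lra). assert (0 <= t^2) by (apply pow_le; lra).
    assert (0 <= (1-3*t^4)*t^2*(7/5 - 7/10*t)) by (apply Rmult_le_pos; [apply Rmult_le_pos|]; lra). lra. }
  set (c := sqrt (2*v)).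
  assert (Hc2 : c^2 = 2*v) by (apply sqrt2v_sq; lra).
  assert (Hc0 : 0 < c) by (apply sqrt_lt_R0; lra).
  assert (Hc1 : c < 1) by (apply c_lt_1; lra).
  assert (Hbc : b * c <= v).
  { assert (Hb2 : b^2 <= v/2) by (rewrite Hvt; lra).
    assert (Hsq : (b*c)^2 <= v^2) by (replace ((b*c)^2) with (b^2*c^2) by ring; rewrite Hc2; nra).
    destruct (Rle_or_lt (b*c) v) as [Hh|Hh]; [exact Hh|]. nra. }
  assert (Hb1 : b < 1) by nra.
  assert (HPhib : Phi b v < 0).
  { unfold Phi.
    destruct (ym_range b v ltac:(lra) Hv0) as [R1 R2].
    assert (A1 : Mm b v <= Af b v (ytl t) + (b*ytl t+v-ytl t^2)^2/(4*(2/3*ytl t-b/2))).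
    { unfold Mm. apply A_bound; lra. }
    assert (A2 : Hf b v (xtl t) 1 <= W1 b v) by (apply W1_ge; lra).
    assert (A3 : Af b v (ytl t) + (b*ytl t+v-ytl t^2)^2/(4*(2/3*ytl t-b/2)) < Hf b v (xtl t) 1).
    { rewrite Hvt in *.
      set (kk := 2/3*ytl t - b/2) in *.
      set (D := Af b (3/2*t^4) (ytl t) - Hf b (3/2*t^4) (xtl t) 1) in *.
      set (Q := (b*ytl t+3/2*t^4-ytl t^2)^2) in *.
      assert (Q/(4*kk) < - D).
      { apply (Rmult_lt_reg_l (4*kk)); [lra|].
        replace (4*kk*(Q/(4*kk))) with Q by (field; lra). lra. }
      unfold D in H. lra. }
    lra. }
  set (EP := fun a => a = 0 \/ (0 <= a <= 1 /\ 0 <= Phi a v)).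
  assert (HEP0 : EP 0) by (left; reflexivity).
  assert (HEPb : forall z, EP z -> z <= 1) by (intros z [Hz|Hz]; lra).
  destruct (Lub_fin EP 0 1 HEP0 HEPb) as [HLf [HL0 HL1]].
  set (aP := real (Lub_Rbar EP)) in *.
  destruct (Lub_Rbar_correct EP) as [Hub Hleast].
  rewrite HLf in Hub, Hleast.
  assert (Pa : forall a, 0 <= a -> a < aP -> 0 <= Phi a v).
  { intros a Ha HaP. destruct (Rle_or_lt 0 (Phi a v)) as [Hh|Hh]; [exact Hh|].
    exfalso.
    assert (Hr : Rbar_le (Finite aP) (Finite a)).
    { apply Hleast. intros z Hz. simpl. destruct Hz as [Hz|[Hz1 Hz2]]; [lra|].
      destruct (Rle_or_lt z a) as [H'|H']; [exact H'|].
      pose proof (Phi_mono a z v ltac:(lra) Hv0 Hv2). lra. }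
    simpl in Hr. lra. }
  assert (Pb : forall a, 0 <= a <= 1 -> aP < a -> Phi a v < 0).
  { intros a Ha HaP. destruct (Rle_or_lt 0 (Phi a v)) as [Hh|Hh]; [|exact Hh].
    exfalso. assert (Hr : Rbar_le (Finite a) (Finite aP)) by (apply Hub; right; auto).
    simpl in Hr. lra. }
  assert (Pc : aP < b).
  { assert (Hr : Rbar_le (Finite aP) (Finite (Rmax 0 (b + 2*Phi b v)))).
    { apply Hleast. intros z Hz. simpl. destruct Hz as [Hz|[Hz1 Hz2]].
      - rewrite Hz. apply Rmax_l.
      - apply Rle_trans with (b + 2*Phi b v); [|apply Rmax_r].
        destruct (Rle_or_lt b z) as [H'|H'].
        + pose proof (Phi_mono b z v ltac:(lra) Hv0 Hv2). lra.
        + pose proof (Phi_lip z b v ltac:(lra) Hv0 Hv2). lra. }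
    simpl in Hr. apply Rle_lt_trans with (Rmax 0 (b + 2*Phi b v)); [exact Hr|].
    apply Rmax_lub_lt; lra. }
  assert (YPc : forall a, 0 <= a -> a < b -> yP a v < c).
  { intros a Ha Hab. destruct (yP_facts a v Ha Hv0) as [P1 [P2 P3]].
    assert (Hac : a*c < v) by nra.
    destruct (Rlt_or_le (yP a v) c) as [Hh|Hh]; [exact Hh|]. exfalso.
    assert (Hpp : yP a v * (yP a v - a) >= c * (c - a)) by nra. nra. }
  assert (Hsm : subs_moderated_profit v = t^6).
  { unfold subs_moderated_profit. replace (2*v/3) with ((t^2)^2) by (rewrite Hvt; field).
    rewrite sqrt_pow2 by (apply pow_le; lra). ring. }
  set (K := b^2 + 1 - 3*t^4) in *.
  set (Bnd := ((s0^2-K)*(1+b-s0) + (-3*s0^2+2*(1+b)*s0+K)^2/(4*(2*s0-1-b)))/2).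
  assert (HBnd : Bnd < t^6).
  {     set (kk := 2*s0-1-b) in *.
    set (Q := (-3*s0^2+2*(1+b)*s0+K)^2) in *.
    assert (Q/(4*kk) < - ((s0^2-K)*(1+b-s0) - 2*t^6)).
    { apply (Rmult_lt_reg_l (4*kk)); [lra|].
      replace (4*kk*(Q/(4*kk))) with Q by (field; lra). lra. }
    unfold Bnd. fold kk Q. lra. }
  assert (HPiS : forall a, 0 <= a -> a < b -> PiS v a <= Bnd).
  { intros a Ha Hab. apply PiS_le; [split; lra | lra |].
    intros p Hp.
    set (C := 1 - 2*(v-p)).
    assert (HC : 0 < C) by (unfold C; lra).
    assert (Ea := sqrt_sqrt (a^2 + C) ltac:(nra)). assert (Pa' := sqrt_pos (a^2 + C)).
    assert (Eb := sqrt_sqrt (b^2 + C) ltac:(nra)). assert (Pb' := sqrt_pos (b^2 + C)).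
    replace (a ^ 2 + 1 - 2 * (v - p)) with (a^2 + C) by (unfold C; ring).
    set (sa := sqrt (a^2 + C)) in *. set (sb := sqrt (b^2 + C)) in *.
    assert (Hsa : a <= sa) by nra.
    assert (Hsb : sb <= sa + (b - a)).
    { destruct (Rle_or_lt sb (sa + (b-a))) as [Hh|Hh]; [exact Hh|]. exfalso. nra. }
    assert (S1 : p * (1 + a - sa) <= p * (1 + b - sb)) by nra.
    assert (Hp' : p = (sb^2 - K)/2).
    { unfold K. replace (sb^2) with (sb*sb) by ring. rewrite Eb. unfold C. rewrite Hvt. field. }
    assert (S2 : (sb^2-K)*(1+b-sb) <= (s0^2-K)*(1+b-s0) + (-3*s0^2+2*(1+b)*s0+K)^2/(4*(2*s0-1-b))).
    { apply f_bound; [exact Pb' | lra]. }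
    assert (S3 : p*(1+b-sb) = (sb^2-K)*(1+b-sb)/2) by (rewrite Hp' at 1; field).
    unfold Bnd. lra. }
  assert (HtS : 0 <= t^2 /\ subs_moderated_profit v <= PiS v (t^2)).
  { split; [apply pow_le; lra|]. rewrite Hsm.
    set (s1 := 1 + t^2/3).
    set (p0 := (s1^2 - ((t^2)^2 + 1 - 2*v))/2).
    assert (Hp0 : 0 <= p0) by (unfold p0, s1; rewrite Hvt; nra).
    assert (Ht2 : t^2 <= 1) by nra.
    apply Rle_trans with (p0 * (1 + t^2 - sqrt ((t^2) ^ 2 + 1 - 2 * (v - p0)))).
    2:{ apply PiS_ge; [split; nra | lra | exact Hp0]. }
    replace ((t^2) ^ 2 + 1 - 2 * (v - p0)) with (s1^2) by (unfold p0; field).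
    rewrite sqrt_pow2 by (unfold s1; assert (0 <= t^2) by nra; lra).
    unfold p0, s1. rewrite Hvt. nra. }
  assert (HSb : b <= alphaS v <= t^2).
  { apply alphaS_bounds; [exact HtS|].
    intros a [Ha Ha2]. destruct (Rle_or_lt b a) as [Hh|Hh]; [exact Hh|].
    pose proof (HPiS a Ha Hh). lra. }
  exists aP. split; [|split; [|split; [|split]]].
  - intros a Ha HaP. pose proof (Pa a (proj1 Ha) HaP) as HP.
    assert (Hyc := YPc a (proj1 Ha) ltac:(lra)).
    destruct (yP_facts a v (proj1 Ha) Hv0) as [P1 _].
    assert (Eym : ym a v = yP a v) by (unfold ym; apply Rmin_left; fold c; lra).
    split; [lra|].
    intros y' Hy'. rewrite <- Eym, W_ym by lra.
    apply Rle_trans with (Rmax (Mm a v) (W1 a v)); [apply W_le_max; lra|].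
    unfold Phi in HP. apply Rmax_lub; lra.
  - intros a Ha HaP. pose proof (Pb a Ha HaP) as HP. split; [lra|].
    intros y' Hy'. apply Rle_trans with (Rmax (Mm a v) (W1 a v)); [apply W_le_max; lra|].
    unfold Phi in HP. fold (W1 a v). apply Rmax_lub; lra.
  - lra.
  - unfold alphaA. apply Rle_lt_trans with (t^2); [lra|].
    assert (0 <= sqrt (2*v)) by apply sqrt_pos.
    assert (E2 := sqrt_sqrt (2*v) ltac:(lra)).
    destruct (Rlt_or_le (t^2) (sqrt (2*v))) as [Hh|Hh]; [exact Hh|]. exfalso.
    assert (Hm : sqrt (2*v) * sqrt (2*v) <= t^2 * t^2) by (apply Rmult_le_compat; lra).
    assert (0 < t^4) by (apply pow_lt; lra). rewrite E2, Hvt in Hm. nra.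
  - intros a Ha HaP. split.
    + destruct (yP_facts a v (proj1 Ha) Hv0) as [P1 [P2 P3]].
      unfold yS. assert (0 <= sqrt (2*v/3)) by apply sqrt_pos.
      assert (E2 := sqrt_sqrt (2*v/3) ltac:(lra)).
      destruct (Rlt_or_le (sqrt (2*v/3)) (yP a v)) as [Hh|Hh]; [exact Hh|]. exfalso. nra.
    + unfold yA. apply YPc; lra.
Qed.
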